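(* Let $\alpha\in(0,1]$, $\lambda_\alpha=\sqrt{\log(1/\alpha)/2}$, $p_1,\dots,p_m\in[0,1]$, and for $A\subseteq\{1,\dots,m\}$, $t\in[0,1]$, $\varphi_{A,t}=\mathbf 1\{i_A(t)>|A|t+\sqrt{|A|}\lambda_\alpha\}$, $\varphi_A=\max_{t\in[0,1]}\varphi_{A,t}$. Then $\hat m_0^{\mathrm{SC1}}:=\hat V^{\mathrm{SC1}}_\varphi(\{1,\dots,m\})$ satisfies $$\hat m_0^{\mathrm{SC1}}=\min_{t\in[0,1)}\Big\lfloor\Big(\frac{\lambda_\alpha}{2(1-t)}+\sqrt{\frac{\lambda_\alpha^2}{4(1-t)^2}+\frac{m-i(t)}{1-t}}\Big)^2\Big\rfloor\wedge m.$$
   Context: $i_A(t)=\#\{j\in A:p_j\le t\}$, $i(t)=i_{\{1,\dots,m\}}(t)$. For $S\subseteq\{1,\dots,m\}$: $\varphi_{S,n,t}=\min\{\varphi_{A,t}:A\subseteq\{1,\dots,m\},|A\cap S|=n\}$ and $\hat V^{\mathrm{SC1}}_\varphi(S)=\max\{n\in\{0,\dots,|S|\}:\max_{t\in[0,1]}\varphi_{S,n,t}=0\}$. *)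

(* Defs.v *)
From HB Require Import structures.
From mathcomp Require Import all_boot all_order all_algebra.
From mathcomp Require Import all_classical all_reals all_analysis.
Set Implicit Arguments. Unset Strict Implicit. Unset Printing Implicit Defensive.
Import Order.TTheory GRing.Theory Num.Theory.
Local Open Scope ring_scope.
Local Open Scope classical_set_scope.

Section Defs.
Variables (R : realType) (m : nat) (p : 'I_m -> R).

Definition lam (alpha : R) : R := Num.sqrt (ln (alpha^-1) / 2).

Definition iA (A : {set 'I_m}) (t : R) : nat := #|[set j in A | p j <= t]|.

Definition icount (t : R) : nat := iA [set: 'I_m] t.

Definition phiAt (alpha : R) (A : {set 'I_m}) (t : R) : bool :=
  (#|A|%:R * t + Num.sqrt (#|A|%:R) * lam alpha < (iA A t)%:R).

(* phi_{S,n,t} = min { phi_{A,t} : |A cap S| = n }; a min of 0/1 indicators is 1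
   iff all of them are 1. *)
Definition phiSnt (alpha : R) (S : {set 'I_m}) (n : nat) (t : R) : bool :=
  [forall A : {set 'I_m}, (#|A :&: S| == n) ==> phiAt alpha A t].

Definition maxt_phi_zero (alpha : R) (S : {set 'I_m}) (n : nat) : Prop :=
  forall t : R, 0 <= t <= 1 -> ~~ phiSnt alpha S n t.

Definition VhatSC1 (alpha : R) (S : {set 'I_m}) : nat :=
  \max_(n < #|S|.+1 | `[< maxt_phi_zero alpha S n >]) (n : nat).

Definition gfun (alpha t : R) : R :=
  (lam alpha / (2 * (1 - t)) +
   Num.sqrt ((lam alpha) ^+ 2 / (4 * (1 - t) ^+ 2)
             + (m%:R - (icount t)%:R) / (1 - t))) ^+ 2.

(* min_{t in [0,1)} floor(gfun t), as the infimum of a set of integers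
   (bounded below by 0, hence attained) *)
Definition rhs_min (alpha : R) : R :=
  inf [set ((Num.floor (gfun alpha t))%:~R : R) | t in `[0, 1[%classic].

End Defs.

(* Main.v *)
Require Import Defs.
From HB Require Import structures.
From mathcomp Require Import all_boot all_order all_algebra.
From mathcomp Require Import all_classical all_reals all_analysis.
From mathcomp Require Import ring lra zify.
Import Order.TTheory GRing.Theory Num.Theory.
Local Open Scope ring_scope.

Lemma natz_R (R : realType) (n : nat) : ((n%:Z)%:~R : R) = n%:R.
Proof. by []. Qed.

Lemma ex_subset_card (T : finType) (X : {set T}) (k : nat) :
  (k <= #|X|)%N -> exists A : {set T}, A \subset X /\ #|A| = k.
Proof.
elim: k => [|k IH] hk.
  by exists (@finset.set0 T); rewrite finset.sub0set cards0.
have [A [sAX cA]] := IH (ltnW hk).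
have : (0 < #|X :\: A|)%N.
  by rewrite cardsD (finset.setIidPr sAX) cA subn_gt0.
rewrite card_gt0 => /set0Pn [x]; rewrite inE => /andP [xA xX].
exists (x |: A); split.
  by rewrite finset.subUset finset.sub1set xX sAX.
by rewrite cardsU1 xA cA.
Qed.

Lemma quad (R : realType) (x L c a : R) : 0 <= x -> 0 <= L -> 0 <= c -> 0 < a ->
  (a * x ^+ 2 - L * x - c <= 0) =
  (x <= L / (2 * a) + Num.sqrt (L ^+ 2 / (4 * a ^+ 2) + c / a)).
Proof.
move=> x0 L0 c0 a0.
set u := L / (2 * a).
have u0 : 0 <= u by rewrite /u divr_ge0 // mulr_ge0 // ltW.
have Deq : L ^+ 2 / (4 * a ^+ 2) = u ^+ 2.
  by rewrite /u expr_div_n exprMn; congr (_ / _); rewrite -natrX.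
rewrite Deq.
set D := u ^+ 2 + c / a.
have D0 : 0 <= D by rewrite /D addr_ge0 ?sqr_ge0 // divr_ge0 // ltW.
set s := Num.sqrt D.
have s0 : 0 <= s := sqrtr_ge0 D.
have ss : s ^+ 2 = D by rewrite sqr_sqrtr.
have su : u <= s.
  rewrite -(ler_pXn2r (n:=2)) ?nnegrE // ss /D lerDl divr_ge0 // ltW //.
have key : a * x ^+ 2 - L * x - c = a * ((x - u) ^+ 2 - s ^+ 2).
  rewrite ss /D /u; field; rewrite ?lt0r_neq0 //.
rewrite key pmulr_rle0 // subr_le0.
apply/idP/idP => h.
  have : (x - u) ^+ 2 <= s ^+ 2 by [].
  move=> h2; nra.
nra.
Qed.

Section Main.
Variables (R : realType) (m : nat) (p : 'I_m -> R) (alpha : R).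

Definition Bs (t : R) : {set 'I_m} := [set j : 'I_m | t < p j].

Lemma cnt_eq t : (icount p t + #|Bs t| = m)%N.
Proof.
rewrite /icount /iA.
have -> : [set j in [set: 'I_m] | p j <= t] = ~: Bs t.
  by apply/setP => j; rewrite !inE leNgt.
by rewrite addnC cardsC card_ord.
Qed.

Lemma iA_le (A : {set 'I_m}) t : (iA p A t <= #|A :\: Bs t|)%N.
Proof.
apply: subset_leq_card; apply/fintype.subsetP => j; rewrite !inE => /andP [jA pj].
by rewrite jA andbT -leNgt.
Qed.

Lemma phi_iff n t : (n <= m)%N ->
  phiSnt p alpha [set: 'I_m] n t =
  (n%:R * t + Num.sqrt n%:R * lam alpha < (n - #|Bs t|)%N%:R).
Proof.
move=> hn; apply/idP/idP.
  move=> /forallP H.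
  have [A [hA hi]] : exists A : {set 'I_m}, #|A| = n /\ (iA p A t <= n - #|Bs t|)%N.
    case: (leqP n #|Bs t|) => h.
      have [A [sA cA]] := ex_subset_card _ _ _ h.
      exists A; split => //; apply: leq_trans (iA_le A t) _.
      by rewrite cardsD (finset.setIidPl sA) cA subnn.
    have hC : (n - #|Bs t| <= #|~: Bs t|)%N.
      have := cardsC (Bs t); rewrite card_ord => e.
      lia.
    have [C [sC cC]] := ex_subset_card _ _ _ hC.
    have dis : Bs t :&: C = finset.set0.
      apply/setP => j; rewrite !inE.
      apply/negbTE/negP => /andP [h1 h2].
      by have := fintype.subsetP sC j h2; rewrite !inE h1.
    exists (Bs t :|: C); split.
      rewrite cardsU dis cards0 cC; lia.
    apply: leq_trans (iA_le _ t) _.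
    rewrite cardsD (finset.setIidPr (finset.subsetUl _ _)) cardsU dis cards0 cC.
    lia.
  have := implyP (H A); rewrite finset.setIT hA eqxx => /(_ isT).
  rewrite /phiAt hA => h; apply: (lt_le_trans h); by rewrite ler_nat.
move=> h; apply/forallP => A; apply/implyP; rewrite finset.setIT => /eqP hA.
rewrite /phiAt hA; apply: (lt_le_trans h); rewrite ler_nat.
have : (#|A| <= iA p A t + #|Bs t|)%N.
  apply: leq_trans (leq_card_setU _ _).
  apply: subset_leq_card; apply/fintype.subsetP => j jA.
  rewrite !inE jA /=; case: leP => //.
lia.
Qed.

Lemma trunc_iff (n c : nat) (t : R) : 0 <= t ->
  (n%:R * t + Num.sqrt n%:R * lam alpha < (n - c)%N%:R) =
  (n%:R * t + Num.sqrt n%:R * lam alpha < n%:R - c%:R).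
Proof.
move=> t0.
have ge : 0 <= n%:R * t + Num.sqrt n%:R * lam alpha.
  by rewrite addr_ge0 ?mulr_ge0 ?sqrtr_ge0.
case: (leqP c n) => h; first by rewrite natrB.
have -> : (n - c)%N = 0%N by apply/eqP; rewrite subn_eq0 ltnW.
rewrite ltNge ge /=; apply/esym/negbTE; rewrite -leNgt.
by apply: le_trans ge; rewrite subr_le0 ler_nat ltnW.
Qed.


Lemma g_iff (n : nat) (t : R) : 0 <= t < 1 ->
  (n%:R - #|Bs t|%:R <= n%:R * t + Num.sqrt n%:R * lam alpha) =
  (n%:R <= gfun p alpha t).
Proof.
case/andP => t0 t1.
set x := Num.sqrt (n%:R : R).
set c := #|Bs t|.
set L := lam alpha.
have x0 : 0 <= x := sqrtr_ge0 _.
have L0 : 0 <= L := sqrtr_ge0 _.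
have xx : x ^+ 2 = n%:R by rewrite sqr_sqrtr ?ler0n.
have a0 : 0 < 1 - t by rewrite subr_gt0.
have e1 : (n%:R - c%:R <= n%:R * t + x * L) = ((1 - t) * x ^+ 2 - L * x - c%:R <= 0).
  by rewrite -subr_le0 xx; congr (_ <= 0); ring.
rewrite e1 quad ?ler0n //.
rewrite /gfun -/L -xx.
have -> : (m%:R - (icount p t)%:R : R) = c%:R.
  have e : (m%:R : R) = (icount p t)%:R + c%:R by rewrite -natrD cnt_eq.
  by rewrite e addrC addKr.
rewrite ler_pXn2r // nnegrE // addr_ge0 ?sqrtr_ge0 // divr_ge0 // mulr_ge0 // ltW //.
Qed.

Lemma good_iff n : (n <= m)%N ->
  maxt_phi_zero p alpha [set: 'I_m] n <->
  (forall t, 0 <= t < 1 -> n%:Z <= Num.floor (gfun p alpha t)).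
Proof.
move=> hn; split.
  move=> H t /andP [t0 t1].
  have := H t; rewrite t0 ltW //= => /(_ isT).
  rewrite phi_iff // trunc_iff // -leNgt g_iff ?t0 //.
  by rewrite floor_ge_int.
move=> H t /andP [t0 t1].
rewrite phi_iff // trunc_iff // -leNgt.
case: (ltP t 1) => tl.
  rewrite g_iff ?t0 //; have := H t; rewrite t0 tl => /(_ isT).
  by rewrite floor_ge_int.
have -> : t = 1 by apply/eqP; rewrite eq_le t1 tl.
rewrite mulr1 lerD ?gerBl ?ler0n //.
apply: (@le_trans _ _ 0); first by rewrite oppr_le0 ler0n.
by rewrite mulr_ge0 ?sqrtr_ge0.
Qed.

End Main.

Theorem mainTheorem11 (R : realType) (m : nat) (p : 'I_m -> R) (alpha : R)
  (halpha : 0 < alpha <= 1) (hp : forall j, 0 <= p j <= 1) :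
  ((VhatSC1 p alpha [set: 'I_m])%:R : R) = Num.min (rhs_min p alpha) m%:R.
Proof.
set g := gfun p alpha.
have fg0 : forall t, 0 <= Num.floor (g t) by move=> t; rewrite floor_ge0 /g /gfun sqr_ge0.
pose P (k : nat) := `[< exists2 t : R, 0 <= t < 1 & Num.floor (g t) = k%:Z >].
have exP : exists k, P k.
  exists (absz (Num.floor (g 0))); apply/asboolP; exists (0:R); first by rewrite lexx ltr01.
  by rewrite gez0_abs.
case: (ex_minnP exP) => k0 /asboolP [t0 ht0 hk0] mink.
have lb : forall t, 0 <= t < 1 -> k0%:Z <= Num.floor (g t).
  move=> t ht; have := mink `|Num.floor (g t)|%N.
  rewrite -lez_nat gez0_abs //; apply; apply/asboolP; exists t => //.
  by rewrite gez0_abs.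
have good : forall n, (n <= m)%N -> maxt_phi_zero p alpha [set: 'I_m] n <-> (n <= k0)%N.
  move=> n hn; rewrite good_iff //; split.
    by move=> H; have := H t0 ht0; rewrite hk0 lez_nat.
  move=> h t ht; apply: le_trans (lb t ht); by rewrite lez_nat.
have V : VhatSC1 p alpha [set: 'I_m] = minn k0 m.
  have cT : #|[set: 'I_m]| = m by rewrite cardsT card_ord.
  rewrite /VhatSC1; apply/eqP; rewrite eqn_leq; apply/andP; split.
    apply/bigmax_leqP => i /asboolP hi.
    have im : (i <= m)%N by rewrite -ltnS; apply: leq_trans (ltn_ord i) _; rewrite cT.
    by rewrite leq_min im andbT -good.
  have hlt : (minn k0 m < #|[set: 'I_m]|.+1)%N by rewrite cT ltnS geq_minr.
  apply: (leq_bigmax_cond (Ordinal hlt)) => /=.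
  by apply/asboolP; rewrite good ?geq_minl ?geq_minr.
have rhs : rhs_min p alpha = k0%:R.
  rewrite /rhs_min -/g.
  match goal with |- inf ?X = _ => set E := X end.
  have hE : forall t : R, (`[0, 1[%classic : set R) t -> 0 <= t < 1.
    by move=> t /=; rewrite in_itv.
  have hE' : forall t : R, 0 <= t < 1 -> (`[0, 1[%classic : set R) t.
    by move=> t /=; rewrite in_itv /= => ->.
  apply/eqP; rewrite eq_le; apply/andP; split.
    have hl : has_lbound E.
      exists 0; move=> y [t _ <-]; by rewrite ler0z.
    apply: (ge_inf hl); exists t0; first by apply: hE'.
    by rewrite hk0.
  apply: lb_le_inf.
    by exists k0%:R; exists t0; [apply: hE' | rewrite hk0].
  move=> y [t ht <-].
  change ((k0%:Z)%:~R <= ((Num.floor (g t))%:~R : R)).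
  by rewrite ler_int lb // hE.
rewrite V rhs -natr_min //.
Qed.
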